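(* Let $\mathcal{Z}\subset\mathbb{R}^n$ be closed and $f:\mathbb{R}^n\times\mathcal{Z}\to\mathbb{R}^n$ continuous. Then the set-valued map $z\mapsto\hat f(z):=f(z,P_\mathcal{Z}(z))=\{f(z,p):p\in P_\mathcal{Z}(z)\}$ is locally bounded and outer semicontinuous. Furthermore, if $\mathcal{Z}$ is $\alpha$-prox-regular for some $\alpha>0$, then $\hat f$ is single-valued and continuous on $\mathcal{Z}+\tfrac{1}{2\alpha}\operatorname{int}\mathbb{B}$.
   Context: $P_\mathcal{Z}(z):=\{\tilde z\in\mathcal{Z}:\|z-\tilde z\|=\inf_{y\in\mathcal{Z}}\|z-y\|\}$. $\operatorname{int}\mathbb{B}$ is the open unit ball. A Clarke regular closed set $\mathcal{Z}$ (i.e., $x\mapsto T_x\mathcal{Z}$ inner semicontinuous, with $T_x\mathcal{Z}$ the tangent cone and $N_x\mathcal{Z}$ its polar) is $\alpha$-prox-regular if for every $x\in\mathcal{Z}$ and every $\eta\in N_x\mathcal{Z}$, $\langle\eta,y-x\rangle\le\alpha\|\eta\|\|y-x\|^2$ for all $y\in\mathcal{Z}$. *)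

(* Defs.v *)
From HB Require Import structures.
From mathcomp Require Import all_boot all_order all_algebra.
From mathcomp Require Import all_classical all_reals all_analysis.
Set Implicit Arguments. Unset Strict Implicit. Unset Printing Implicit Defensive.
Import Order.TTheory GRing.Theory Num.Theory.
Import numFieldNormedType.Exports.
Local Open Scope classical_set_scope.
Local Open Scope ring_scope.

Section Defs.
Variables (R : realType) (n : nat).
Local Notation V := 'rV[R]_n.

Definition edot (u v : V) : R := \sum_(i < n) u ord0 i * v ord0 i.
Definition enorm (u : V) : R := Num.sqrt (edot u u).

Definition projZ (Z : set V) (z : V) : set V :=
  [set zt | Z zt /\ enorm (z - zt) = inf [set enorm (z - y) | y in Z]].

Definition tcone (Z : set V) (x : V) : set V :=
  [set v | exists (t : nat -> R) (w : nat -> V),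
     (forall k, 0 < t k) /\ t @ \oo --> 0 /\ w @ \oo --> v /\
     (forall k, Z (x + t k *: w k))].

Definition ncone (Z : set V) (x : V) : set V :=
  [set eta | forall v, tcone Z x v -> edot eta v <= 0].

Definition inner_sc (Z : set V) (M : V -> set V) : Prop :=
  forall x, Z x -> forall u : nat -> V, (forall k, Z (u k)) -> u @ \oo --> x ->
  forall v, M x v -> exists w : nat -> V, (forall k, M (u k) (w k)) /\ w @ \oo --> v.

Definition clarke_regular (Z : set V) : Prop := closed Z /\ inner_sc Z (tcone Z).

Definition prox_regular (alpha : R) (Z : set V) : Prop :=
  clarke_regular Z /\
  forall x, Z x -> forall eta, ncone Z x eta -> forall y, Z y ->
    edot eta (y - x) <= alpha * enorm eta * enorm (y - x) ^+ 2.

Definition locally_bounded (F : V -> set V) : Prop :=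
  forall x : V, exists U : set V, nbhs x U /\
    exists M : R, forall z y, U z -> F z y -> enorm y <= M.

Definition outer_sc (F : V -> set V) : Prop :=
  forall (x y : V) (u w : nat -> V), u @ \oo --> x -> w @ \oo --> y ->
    (forall k, F (u k) (w k)) -> F x y.

Definition enlarge (Z : set V) (r : R) : set V :=
  [set z | exists x, Z x /\ enorm (z - x) < r].

End Defs.

(* Main.v *)
Require Import Defs.
From HB Require Import structures.
From mathcomp Require Import all_boot all_order all_algebra.
From mathcomp Require Import all_classical all_reals all_analysis.
From mathcomp Require Import ring lra.
Import Order.TTheory GRing.Theory Num.Theory.
Import numFieldNormedType.Exports.
Local Open Scope classical_set_scope.
Local Open Scope ring_scope.

Section Aux.
Variables (R : realType) (n : nat).
Local Notation V := 'rV[R]_n.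

Lemma edot_ge0 (u : V) : 0 <= edot u u.
Proof. by apply: sumr_ge0 => i _; rewrite -expr2 sqr_ge0. Qed.

Lemma enorm_ge0 (u : V) : 0 <= enorm u.
Proof. exact: sqrtr_ge0. Qed.

Lemma enorm_sq (u : V) : enorm u ^+ 2 = edot u u.
Proof. by rewrite sqr_sqrtr // edot_ge0. Qed.

Lemma edot_eq0 (u : V) : edot u u = 0 -> u = 0.
Proof.
move=> h; apply/matrixP => i j; rewrite ord1 mxE.
have H0 : forall k : 'I_n, xpredT k -> 0 <= u ord0 k * u ord0 k.
  by move=> k _; rewrite -expr2 sqr_ge0.
have /eqP := psumr_eq0P H0 h (isT : xpredT j).
by rewrite mulf_eq0 orbb => /eqP.
Qed.

Lemma edotC (u v : V) : edot u v = edot v u.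
Proof. by apply: eq_bigr => i _; rewrite mulrC. Qed.

Lemma edotBl (u v w : V) : edot (u - v) w = edot u w - edot v w.
Proof.
rewrite /edot -sumrB; apply: eq_bigr => i _; by rewrite !mxE mulrBl.
Qed.

Lemma edotDl (u v w : V) : edot (u + v) w = edot u w + edot v w.
Proof.
rewrite /edot -big_split; apply: eq_bigr => i _; by rewrite !mxE mulrDl.
Qed.

Lemma edotZl (a : R) (u w : V) : edot (a *: u) w = a * edot u w.
Proof.
rewrite /edot mulr_sumr; apply: eq_bigr => i _; by rewrite !mxE mulrA.
Qed.

Lemma edotZr (a : R) (u w : V) : edot w (a *: u) = a * edot w u.
Proof. by rewrite edotC edotZl edotC. Qed.

Lemma edotBr (u v w : V) : edot w (u - v) = edot w u - edot w v.
Proof. by rewrite edotC edotBl !(edotC w). Qed.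

Lemma edotDr (u v w : V) : edot w (u + v) = edot w u + edot w v.
Proof. by rewrite edotC edotDl !(edotC w). Qed.

Lemma enormN (u : V) : enorm (- u) = enorm u.
Proof. by rewrite /enorm /edot; congr Num.sqrt; apply: eq_bigr => i _; rewrite !mxE mulrNN. Qed.

Lemma enormB (u v : V) : enorm (u - v) = enorm (v - u).
Proof. by rewrite -enormN opprB. Qed.

Lemma norm_le_enorm (u : V) : `|u| <= enorm u.
Proof.
rewrite [leLHS]/Num.norm /= mx_normrE; apply: bigmax_le => [|[i j] _ /=]; first exact: enorm_ge0.
rewrite ord1 /enorm -(@sqrtr_sqr _ (u ord0 j)) ler_sqrt ?edot_ge0 //.
rewrite /edot (bigD1 j) //= -expr2 lerDl; apply: sumr_ge0 => k _.
by rewrite -expr2 sqr_ge0.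
Qed.

Lemma continuous_edot (w : V) : continuous (fun v : V => edot w v).
Proof.
rewrite /edot.
have := (@continuous_big R _ +%R 0 xpredT add_continuous _ (index_enum 'I_n) (fun i (v : V) => w ord0 i * v ord0 i)).
move=> H; apply: H.
move=> i _ y; exact: (cvgMr (@coord_continuous _ _ _ _ _ y)).
Qed.

Lemma continuous_edot2 : continuous (fun v : V => edot v v).
Proof.
rewrite /edot.
have := (@continuous_big R _ +%R 0 xpredT add_continuous _ (index_enum 'I_n) (fun i (v : V) => v ord0 i * v ord0 i)).
move=> H; apply: H.
move=> i _ y; exact: (cvgM (@coord_continuous _ _ _ _ _ y) (@coord_continuous _ _ _ _ _ y)).
Qed.

Lemma continuous_enorm : continuous (@enorm R n).
Proof.
move=> x; rewrite /enorm.
apply: (continuous_comp (@continuous_edot2 x)); exact: sqrt_continuous.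
Qed.

End Aux.
Require Import Defs.
From HB Require Import structures.
From mathcomp Require Import all_boot all_order all_algebra.
From mathcomp Require Import all_classical all_reals all_analysis.
Import Order.TTheory GRing.Theory Num.Theory.
Import numFieldNormedType.Exports.
Local Open Scope classical_set_scope.
Local Open Scope ring_scope.

Section Aux2.
Variables (R : realType) (n : nat).
Local Notation V := 'rV[R]_n.

Lemma cball_compact (c : V) (r : R) : compact [set v : V | `|v - c| <= r].
Proof.
apply: bounded_closed_compact.
  rewrite /= /bounded_near. near=> M => v /= hv.
  rewrite -(subrK c v); apply: (le_trans (ler_normD _ _)).
  apply: (le_trans (lerD hv (lexx _))).
  near: M; apply: nbhs_pinfty_ge; exact: num_real.
rewrite (_ : [set v | _] = (fun v => `|v - c|) @^-1` [set x | x <= r]) //.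
apply: (@preimage_closed _ _ (fun v : V => `|v - c|) [set x : R | x <= r]); last exact: closed_le.
move=> v _; apply: (continuous_comp (f := fun w : V => w - c) (g := Num.norm)); last exact: norm_continuous.
have := (@cvgB R V _ (nbhs v) _ id (cst c) v c cvg_id (cvg_cst c)); exact.
Unshelve. all: by end_near. Qed.

Lemma cont_subc (c : V) : continuous (fun w : V => w - c).
Proof. move=> v; have := (@cvgB R V _ (nbhs v) _ id (cst c) v c cvg_id (cvg_cst c)); exact. Qed.

Lemma cont_enorm_subc (c : V) : continuous (fun w : V => enorm (w - c)).
Proof. move=> v; apply: continuous_comp; [exact: cont_subc | exact: continuous_enorm]. Qed.

Lemma cont_pair1 (c : V) : continuous (fun q : V * V => enorm (q.1 - c)).
Proof.
move=> q; apply: (continuous_comp (f := fst) (g := fun w : V => enorm (w - c))); last exact: cont_enorm_subc.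
exact: cvg_fst.
Qed.

Lemma cont_pair2 : continuous (fun q : V * V => enorm (q.1 - q.2)).
Proof.
move=> q; apply: (continuous_comp (f := fun q : V * V => q.1 - q.2) (g := @enorm R n)); last exact: continuous_enorm.
exact: sub_continuous.
Qed.

Lemma keyA (Z : set V) (I : Type) (H : set_system I) (PH : ProperFilter H)
  (u s : I -> V) (x z0 : V) :
  closed Z -> Z z0 -> u @ H --> x ->
  (\forall i \near H, Z (s i) /\ forall y, Z y -> enorm (u i - s i) <= enorm (u i - y)) ->
  exists G : set_system (V * V), ProperFilter G /\ ((fun i => (u i, s i)) @ H `<=` G) /\
    exists p, G --> (x, p) /\ Z p /\ forall y, Z y -> enorm (x - p) <= enorm (x - y).
Proof.
move=> clZ Zz0 ux hs.
set F := (fun i => (u i, s i)) @ H.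
have hz : \forall i \near H, enorm (u i - z0) < enorm (x - z0) + 1.
  apply: (@cvgr_lt _ _ _ _ (fun i => enorm (u i - z0)) (enorm (x - z0))); last by rewrite ltrDl.
  exact: (cvg_comp _ _ ux (@cont_enorm_subc z0 x)).
have hu : \forall i \near H, `|x - u i| < 1 := @cvgr_dist_lt _ _ _ _ _ u x ux 1 ltr01.
set M := enorm (x - z0) + 1.
have FK : F ([set v | `|v - x| <= 1] `*` ([set v | `|v - x| <= M + 1] `&` Z)).
  rewrite /F /=. near=> i.
  have h1 : `|x - u i| < 1 by near: i; exact: hu.
  have h2 : enorm (u i - z0) < enorm (x - z0) + 1 by near: i; exact: hz.
  have [h3 h4] : Z (s i) /\ forall y, Z y -> enorm (u i - s i) <= enorm (u i - y) by near: i; exact: hs.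
  split => /=; first by rewrite distrC ltW.
  split => //.
  rewrite -(subrK (u i) (s i)) -addrA; apply: (le_trans (ler_normD _ _)).
  apply: lerD; last by rewrite distrC ltW.
  rewrite distrC; apply: (le_trans (@norm_le_enorm R n _)).
  by apply: (le_trans (h4 _ Zz0)); rewrite ltW.
have cK := compact_setX (cball_compact x 1) (compact_closedI (cball_compact x (M + 1)) clZ).
have [[a p] [[Ka Kp] clq]] := cK F _ FK.
move: clq; rewrite cluster_cvgE => -[G PG [Gq FG]].
exists G; split => //; split => //; exists p.
have Gfst : fst @ G --> a.
  apply: cvg_trans (cvg_app fst Gq) _; exact: cvg_fst.
have Gfx : fst @ G --> x.
  apply: cvg_trans _ ux => A /= hA; apply: FG; exact: hA.
have ax : a = x by apply: (cvg_unique (@norm_hausdorff R V) Gfst Gfx).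
subst a; split => //; split; first by case: Kp.
move=> y Zy.
apply: (ler_cvg_to (a := G) (f := fun q : V * V => enorm (q.1 - q.2)) (g := fun q : V * V => enorm (q.1 - y))).
- exact: (cvg_comp _ _ Gq (@cont_pair2 (x, p))).
- exact: (cvg_comp _ _ Gq (@cont_pair1 y (x, p))).
- apply: FG; rewrite /F /=.
  by apply: filterS hs => i /= [_ h]; apply: h.
Unshelve. all: by end_near. Qed.


Lemma projZP (Z : set V) z p :
  projZ Z z p <-> Z p /\ forall y, Z y -> enorm (z - p) <= enorm (z - y).
Proof.
have hlb : has_lbound [set enorm (z - y) | y in Z].
  by exists 0 => _ [y _ <-]; exact: enorm_ge0.
split.
  move=> [Zp ->]; split => // y Zy; apply: ge_inf => //; by exists y.
move=> [Zp hp]; split => //; apply/eqP; rewrite eq_le; apply/andP; split.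
  by apply: lb_le_inf; [exists (enorm (z - p)); exists p | move=> _ [y Zy <-]; exact: hp].
by apply: ge_inf => //; exists p.
Qed.

Lemma proj_ex (Z : set V) z z0 : closed Z -> Z z0 -> exists p, projZ Z z p.
Proof.
move=> clZ Zz0.
set A := Z `&` [set v | `|v - z| <= enorm (z - z0)].
have A0 : A !=set0.
  exists z0; split => //=; rewrite enormB; exact: norm_le_enorm.
have cA : compact A by rewrite /A setIC; apply: compact_closedI => //; exact: cball_compact.
have cf : {within A, continuous (fun v : V => enorm (v - z))}.
  by apply: continuous_subspaceT; exact: cont_enorm_subc.
have [c cA' hc] := compact_EVT_min A0 cA cf.
move: cA'; rewrite inE => -[Zc hcz].
exists c; apply/projZP; split => // y Zy.
rewrite enormB [enorm (z - y)]enormB.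
have [yA|yA] := pselect (A y); first by apply: hc; rewrite inE.
have hy : enorm (z - z0) < `|y - z|.
  rewrite ltNge; apply/negP => h; apply: yA; split => //.
apply: (le_trans (hc z0 _)); first by rewrite inE; split => //=; rewrite enormB; exact: norm_le_enorm.
rewrite enormB; apply: (le_trans (ltW hy)); exact: norm_le_enorm.
Qed.


Lemma proj_normal (Z : set V) z p : projZ Z z p -> ncone Z p (z - p).
Proof.
move=> /projZP [Zp hp] v [t [w [t0 [tc [wc Zw]]]]].
set eta := z - p.
have key : forall k, 2 * edot eta (w k) <= t k * edot (w k) (w k).
  move=> k; have := hp _ (Zw k).
  have e1 : z - (p + t k *: w k) = eta - t k *: w k by rewrite /eta opprD addrA.
  rewrite e1 => h0.
  have h : enorm (z - p) * enorm (z - p) <= enorm (eta - t k *: w k) * enorm (eta - t k *: w k).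
    by apply: ler_pM => //; exact: enorm_ge0.
  move: h; rewrite -!expr2 !enorm_sq.
  rewrite !(edotBl, edotBr, edotZl, edotZr) (@edotC R n (w k) z) (@edotC R n (w k) p) => h.
  have tk := t0 k.
  nra.
have H2 : 2 * edot eta v <= 0 * edot v v.
  apply: (ler_cvg_to (a := \oo) (f := fun k => 2 * edot eta (w k))
    (g := fun k => t k * edot (w k) (w k))).
  - apply: cvgMr; exact: (cvg_comp _ _ wc (@continuous_edot R n eta v)).
  - apply: cvgM => //; exact: (cvg_comp _ _ wc (@continuous_edot2 R n v)).
  - by near=> k; exact: key.
by move: H2; rewrite mul0r pmulr_rle0.
Unshelve. all: by end_near. Qed.


Lemma proj_unique (Z : set V) alpha z p1 p2 : 0 < alpha -> prox_regular alpha Z ->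
  enlarge Z (1 / (2 * alpha)) z -> projZ Z z p1 -> projZ Z z p2 -> p1 = p2.
Proof.
move=> a0 [_ pr] [x [Zx hx]] h1 h2.
have n1 := @proj_normal Z z p1 h1; have n2 := @proj_normal Z z p2 h2.
move/projZP: h1 => [Z1 m1]; move/projZP: h2 => [Z2 m2].
have d12 : enorm (z - p1) = enorm (z - p2) by apply/eqP; rewrite eq_le m1 ?m2.
have dl : enorm (z - p1) < 1 / (2 * alpha) := le_lt_trans (m1 _ Zx) hx.
have i1 := pr _ Z1 _ n1 _ Z2.
have i2 := pr _ Z2 _ n2 _ Z1.
rewrite -d12 (@enormB R n p1 p2) in i2.
rewrite !(@enorm_sq R n) in i1 i2.
have iden : edot (z - p1) (p2 - p1) + edot (z - p2) (p1 - p2) = edot (p2 - p1) (p2 - p1).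
  rewrite !(@edotBl R n) !(@edotBr R n); ring.
have e0 := @edot_ge0 R n (p2 - p1).
have d0 := @enorm_ge0 R n (z - p1).
rewrite ltr_pdivlMr ?mulr_gt0 // in dl.
have : edot (p2 - p1) (p2 - p1) = 0 by nra.
by move/(@edot_eq0 R n)/eqP; rewrite subr_eq0 => /eqP.
Qed.

End Aux2.

Lemma contA (R : realType) (n : nat) (Z : set 'rV[R]_n)
  (f : 'rV[R]_n -> 'rV[R]_n -> 'rV[R]_n) :
  {within [set p : 'rV[R]_n * 'rV[R]_n | Z p.2], continuous (fun p => f p.1 p.2)} ->
  forall (G : set_system ('rV[R]_n * 'rV[R]_n)), ProperFilter G ->
  forall x p, G --> (x, p) -> (\forall q \near G, Z q.2) -> Z p ->
  (fun q => f q.1 q.2) @ G --> f x p.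
Proof.
move=> /subspace_continuousP hf G PG x p Gxp GZ Zp.
apply: cvg_trans (hf (x, p) Zp).
apply: cvg_app => A hA.
have g1 : G [set q | Z q.2 -> A q] := Gxp _ hA.
near=> q.
have hq : Z q.2 -> A q by near: q; exact: g1.
apply: hq; near: q; exact: GZ.
Unshelve. all: by end_near. Qed.

Theorem lemma3p1 (R : realType) (n : nat) (Z : set 'rV[R]_n)
  (f : 'rV[R]_n -> 'rV[R]_n -> 'rV[R]_n) :
  closed Z ->
  {within [set p : 'rV[R]_n * 'rV[R]_n | Z p.2], continuous (fun p => f p.1 p.2)} ->
  let fhat := fun z : 'rV[R]_n => (f z) @` (projZ Z z) in
  (locally_bounded fhat /\ outer_sc fhat) /\
  (forall alpha : R, 0 < alpha -> prox_regular alpha Z ->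
     exists g : 'rV[R]_n -> 'rV[R]_n,
       (forall z, enlarge Z (1 / (2 * alpha)) z -> fhat z = [set g z]) /\
       {within enlarge Z (1 / (2 * alpha)), continuous g}).
Proof.
move=> clZ hf fhat.
have hc := @contA R n Z f hf.
split; [split|].
- move=> x.
  have [[z0 Zz0]|nZ] := pselect (exists z0, Z z0); last first.
    exists setT; split; first exact: filterT.
    by exists 0 => z y _ [p [Zp _] _]; exfalso; apply: nZ; exists p.
  set M0 := enorm (x - z0) + 1.
  exists [set z | `|x - z| < 1 /\ enorm (z - z0) < M0]; split.
    near=> z; split.
      near: z; exact: (@cvgr_dist_lt _ _ _ (nbhs x) _ id x cvg_id 1 ltr01).
    near: z; apply: (@cvgr_lt _ _ _ _ (fun w => enorm (w - z0)) (enorm (x - z0)) (@cont_enorm_subc R n z0 x) M0); by rewrite ltrDl.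
  set K := [set v : 'rV[R]_n | `|v - x| <= 1] `*` ([set v | `|v - x| <= M0 + 1] `&` Z).
  have cK : compact K.
    exact: compact_setX (@cball_compact R n x 1) (compact_closedI (@cball_compact R n x (M0 + 1)) clZ).
  have K0 : K (x, z0).
    split => /=; first by rewrite subrr normr0 ler01.
    split => //; rewrite distrC; apply: (le_trans (@norm_le_enorm R n _)).
    rewrite /M0; lra.
  have hK : {within K, continuous (fun q : 'rV[R]_n * 'rV[R]_n => f q.1 q.2)}.
    by apply: continuous_subspaceW hf => q [_ []].
  have hKn : {within K, continuous (fun q : 'rV[R]_n * 'rV[R]_n => enorm (f q.1 q.2))}.
    move=> q; apply: continuous_comp; [exact: hK | exact: continuous_enorm].
  have [c _ hmax] := compact_EVT_max (ex_intro _ _ K0) cK hKn.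
  exists (enorm (f c.1 c.2)) => z y [hz1 hz2] [p /projZP [Zp mp] <-].
  apply: (hmax (z, p)); rewrite inE.
  split => /=; first by rewrite distrC ltW.
  split => //.
  rewrite -(subrK z p) -addrA; apply: (le_trans (ler_normD _ _)).
  apply: lerD; last by rewrite distrC ltW.
  rewrite distrC; apply: (le_trans (@norm_le_enorm R n _)).
  by apply: (le_trans (mp _ Zz0)); rewrite ltW.
- move=> x y u w ux wy hk.
  have hk' : forall k, exists p, projZ Z (u k) p /\ f (u k) p = w k.
    by move=> k; case: (hk k) => p ? ?; exists p.
  have [s hs] := choice hk'.
  have Zz0 : Z (s 0%N) by case: (hs 0%N) => -[].
  have hev : \forall k \near \oo, Z (s k) /\ forall y, Z y -> enorm (u k - s k) <= enorm (u k - y).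
    by apply: filterE => k; case: (hs k) => /projZP.
  have [G [PG [FG [p [Gxp [Zp mp]]]]]] := @keyA R n Z nat \oo _ u s x (s 0%N) clZ Zz0 ux hev.
  exists p; first by apply/projZP.
  have GZ : \forall q \near G, Z q.2.
    by apply: FG => /=; apply: filterE => k; case: (hs k) => -[].
  have c1 := hc G PG x p Gxp GZ Zp.
  have c2 : (fun q => f q.1 q.2) @ G --> y.
    apply: cvg_trans wy => A hA; apply: FG => /=.
    near=> k; rewrite /= (proj2 (hs k)); near: k; exact: hA.
  exact: (cvg_unique (@norm_hausdorff R _) c1 c2).
- move=> alpha a0 prox.
  set E := enlarge Z (1 / (2 * alpha)).
  have hex : forall z, exists p, E z -> projZ Z z p.
    move=> z; have [[x0 [Zx0 _]]|nE] := pselect (E z).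
      by have [p hp] := @proj_ex R n Z z x0 clZ Zx0; exists p.
    by exists 0.
  have [pr hpr] := choice hex.
  set g := fun z => f z (pr z).
  exists g; split.
    move=> z Ez; apply/seteqP; split => [y [p hp <-]|y ->] /=.
      by rewrite (@proj_unique R n Z alpha z p (pr z) a0 prox Ez hp (hpr _ Ez)).
    by exists (pr z) => //; exact: hpr.
  apply/subspace_continuousP => z Ez.
  move=> B hB; apply: contrapT => nW.
  set W := within E (nbhs z).
  set Hf := within [set w | ~ B (g w)] W.
  have PH : ProperFilter Hf.
    apply: Build_ProperFilter.
    move=> hH.
    have hWB : W [set w | B (g w)].
      near=> w.
      have hw : ~ B (g w) -> set0 w by near: w; exact: hH.
      by apply: contrapT => nb; exact: (hw nb).
    exact: (nW hWB).
  have HW : Hf `=>` W by apply: cvg_within.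
  have ux : id @ Hf --> z.
    apply: cvg_trans HW _; exact: cvg_within.
  have [x0 [Zx0 _]] := Ez.
  have hev : \forall w \near Hf, Z (pr w) /\ forall y, Z y -> enorm (w - pr w) <= enorm (w - y).
    apply: HW; near=> w; apply/projZP; apply: hpr; near: w; exact: withinT.
  have [G [PG [FG [p [Gxp [Zp mp]]]]]] := @keyA R n Z _ Hf PH id pr z x0 clZ Zx0 ux hev.
  have pz : p = pr z.
    by apply: (@proj_unique R n Z alpha z p (pr z) a0 prox Ez _ (hpr _ Ez)); apply/projZP.
  subst p.
  have GZ : \forall q \near G, Z q.2.
    by apply: FG => /=; near=> w; have [] := (near hev w).
  have c1 := hc G PG z (pr z) Gxp GZ Zp.
  have g1 : G [set q | B (f q.1 q.2)] := c1 _ hB.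
  have g2 : G [set q | ~ B (f q.1 q.2)].
    apply: FG => /=; exact: withinT.
  have g3 := @filterI _ G PG _ _ g1 g2.
  have [q [b nb]] := @filter_ex _ G PG _ g3.
  exact: nb b.
Unshelve. all: by end_near.
Qed.
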